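(* Let $n\ge 3$ be odd and $r\ge 1$. Let $w_r^n$ be any closed Eulerian trail of the graph $G_r^n$. Then $B_{w_r^n}$ belongs to the Graver basis of $I_{G_r^n}$ (i.e. it is primitive), and $$\deg(B_{w_r^n})=\frac{1}{2}\left(n+n^2\,\frac{(n-1)^r-1}{n-2}\right).$$
   Context: Graphs $G_r^n$: for an odd integer $n\ge3$, $G_0^n$ is a cycle of length $n$; for $r\ge1$, $G_r^n$ is obtained from $G_{r-1}^n$ by attaching, at each vertex $v$ of degree two in $G_{r-1}^n$, a new cycle of length $n$ that shares exactly the vertex $v$ with $G_{r-1}^n$ (the new cycles are otherwise pairwise vertex-disjoint and disjoint from $G_{r-1}^n$). Every vertex of $G_r^n$ has even degree, so $G_r^n$ has closed Eulerian trails (closed walks using every edge exactly once). For a graph $G$ with edges $e_1,\dots,e_m$, the toric ideal $I_G\subseteq\mathbb{K}[e_1,\dots,e_m]$ is the toric ideal of $A_G=\{\mathbf v_i+\mathbf v_j : \{v_i,v_j\}\in E(G)\}\subseteq\mathbb{Z}^{|V(G)|}$, i.e. the ideal generated by all binomials $\mathbf{e}^{\mathbf u}-\mathbf{e}^{\mathbf v}$ with $\sum_k u_k a_{e_k}=\sum_k v_k a_{e_k}$. For an even closed walk $w=(e_{i_1},\dots,e_{i_{2q}})$ define $B_w=\prod_{k=1}^q e_{i_{2k-1}}-\prod_{k=1}^q e_{i_{2k}}\in I_G$; its degree is $q$. A nonzero binomial $\mathbf{x}^{\mathbf u}-\mathbf{x}^{\mathbf v}$ in a toric ideal is primitive if there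 is no other binomial $\mathbf{x}^{\mathbf w}-\mathbf{x}^{\mathbf z}$ in the ideal with $\mathbf{x}^{\mathbf w}\mid\mathbf{x}^{\mathbf u}$ and $\mathbf{x}^{\mathbf z}\mid\mathbf{x}^{\mathbf v}$; the Graver basis is the set of primitive binomials. *)

(* Defs.v *)
From mathcomp Require Import all_boot.
Set Implicit Arguments. Unset Strict Implicit. Unset Printing Implicit Defensive.

(* A multigraph is given by a number of vertices V (vertices 0..V-1) and an
   ordered list of edges E = [e_1; ...; e_m], each edge a pair of vertices. *)
Definition graph := (nat * seq (nat * nat))%type.

Definition degE (E : seq (nat * nat)) (x : nat) : nat :=
  count (fun e => e.1 == x) E + count (fun e => e.2 == x) E.

Definition cyc_edges (s : seq nat) : seq (nat * nat) := zip s (rot 1 s).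

Definition G0 (n : nat) : graph := (n, cyc_edges (iota 0 n)).

Definition attach (n : nat) (G : graph) (v : nat) : graph :=
  (G.1 + (n - 1), G.2 ++ cyc_edges (v :: iota G.1 (n - 1))).

Definition step (n : nat) (G : graph) : graph :=
  foldl (attach n) G [seq v <- iota 0 G.1 | degE G.2 v == 2].

Definition Grn (n r : nat) : graph := iter r (step n) (G0 n).

(* incidence: column a_e = v_a + v_b, evaluated at vertex x *)
Definition inc (e : nat * nat) (x : nat) : nat := (e.1 == x) + (e.2 == x).

(* x^u - x^v lies in the toric ideal I_G  iff  A_G u = A_G v *)
Definition toric_rel (E : seq (nat * nat)) (u v : {ffun 'I_(size E) -> nat}) : Prop :=
  forall x : nat,
    \sum_(i < size E) u i * inc (nth (0, 0) E i) x
    = \sum_(i < size E) v i * inc (nth (0, 0) E i) x.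

(* x^u - x^v is a primitive binomial of I_G (an element of the Graver basis) *)
Definition primitive (E : seq (nat * nat)) (u v : {ffun 'I_(size E) -> nat}) : Prop :=
  u != v /\ toric_rel u v /\
  forall w z : {ffun 'I_(size E) -> nat},
    toric_rel w z -> w != z ->
    (forall i, w i <= u i) -> (forall i, z i <= v i) ->
    w = u /\ z = v.

(* es = (e_{i_1}, ..., e_{i_m}) (0-based edge indices) is a closed Eulerian
   trail: a closed walk v_0 e_{i_1} v_1 ... e_{i_m} v_m = v_0 using every
   edge exactly once *)
Definition closed_eulerian_trail (E : seq (nat * nat)) (es : seq nat) : Prop :=
  perm_eq es (iota 0 (size E)) /\
  exists vs : seq nat,
    size vs = (size es).+1 /\ nth 0 vs 0 = nth 0 vs (size es) /\
    forall k, k < size es ->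
      let e := nth (0, 0) E (nth 0 es k) in
      ((e.1 == nth 0 vs k) && (e.2 == nth 0 vs k.+1)) ||
      ((e.2 == nth 0 vs k) && (e.1 == nth 0 vs k.+1)).

(* B_w = prod of edges at odd positions (1-based) - prod at even positions *)
Definition Bw_plus (E : seq (nat * nat)) (es : seq nat) : {ffun 'I_(size E) -> nat} :=
  [ffun i : 'I_(size E) =>
     count (fun k => ~~ odd k && (nth 0 es k == i)) (iota 0 (size es))].
Definition Bw_minus (E : seq (nat * nat)) (es : seq nat) : {ffun 'I_(size E) -> nat} :=
  [ffun i : 'I_(size E) =>
     count (fun k => odd k && (nth 0 es k == i)) (iota 0 (size es))].

(* degree of the (homogeneous) binomial B_w *)
Definition Bw_deg (E : seq (nat * nat)) (es : seq nat) : nat :=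
  \sum_(i < size E) Bw_plus E es i.

(* Main.v *)
Require Import Defs.
From mathcomp Require Import all_boot.
From mathcomp Require Import zify.
Set Implicit Arguments. Unset Strict Implicit. Unset Printing Implicit Defensive.

Definition dT := ((nat * nat) * (bool * bool))%type.
Definition dd : bool * bool := (false, false).

Definition sF (F : bool * bool -> nat) (T : seq dT) (x : nat) : nat :=
  \sum_(t <- T) F t.2 * inc t.1 x.

Lemma sF_cat F T1 T2 x : sF F (T1 ++ T2) x = sF F T1 x + sF F T2 x.
Proof. by rewrite /sF big_cat. Qed.
Lemma sF_cons F t T x : sF F (t :: T) x = F t.2 * inc t.1 x + sF F T x.
Proof. by rewrite /sF big_cons. Qed.
Lemma sF_nil F x : sF F [::] x = 0.
Proof. by rewrite /sF big_nil. Qed.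

Fixpoint pth (a b V0 k : nat) : seq (nat * nat) :=
  match k with
  | 0 => [:: (a, b)]
  | k'.+1 => (a, V0) :: pth V0 b V0.+1 k'
  end.
Lemma size_pth a b V0 k : size (pth a b V0 k) = k.+1.
Proof. by elim: k a V0 => [|k IH] a V0 //=; rewrite IH. Qed.

Lemma pth_sum F a b V0 k TC x : map fst TC = pth a b V0 k ->
  sF F TC x = (x == a) * F (nth dd (map snd TC) 0) + (x == b) * F (nth dd (map snd TC) k)
   + \sum_(j < k) (x == V0 + j) * (F (nth dd (map snd TC) j) + F (nth dd (map snd TC) j.+1)).
Proof.
elim: k a V0 TC => [|k IH] a V0 [|t TC] //.
- case: TC => [|t' TC] [Ht]; last by [].
  rewrite sF_cons sF_nil big_ord0 /inc Ht addn0 addn0 [a == x]eq_sym [b == x]eq_sym.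
  rewrite mulnDr !(mulnC (F _)). by [].
- move=> [Ht Hm]; rewrite sF_cons (IH _ _ _ Hm) big_ord_recl /inc Ht.
  have -> : \sum_(i < k) (x == V0 + bump 0 i) *
      (F (nth dd [seq i0.2 | i0 <- t :: TC] (bump 0 i)) + F (nth dd [seq i0.2 | i0 <- t :: TC] (bump 0 i).+1))
     = \sum_(j < k) (x == V0.+1 + j) *
      (F (nth dd [seq i.2 | i <- TC] j) + F (nth dd [seq i.2 | i <- TC] j.+1)).
    by apply: eq_bigr => i _; rewrite /bump add1n addnS addSn.
  rewrite addn0 [a == x]eq_sym [V0 == x]eq_sym.
  case: TC Hm => [|tt TC] Hm; first by case: k Hm IH.
  set S := \sum_(j < k) _. simpl. lia.
Qed.

Lemma sum_collapse k V0 x (g : nat -> nat) :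
  \sum_(j < k) (x == V0 + j) * g j = if (V0 <= x) && (x < V0 + k) then g (x - V0) else 0.
Proof.
elim: k => [|k IH]; first by rewrite big_ord0; case: ifP => //; lia.
rewrite big_ord_recr IH /=.
case: (eqVneq x (V0 + k)) => [->|Hx].
- rewrite ifF; last lia.
  rewrite ifT; last lia.
  by rewrite addKn mul1n.
- rewrite mul0n addn0.
  case: ifP => H1; case: ifP => H2 //; lia.
Qed.
Definition nthD (TC : seq dT) j := nth dd (map snd TC) j.

Lemma chunk_root F v V0 k TC : map fst TC = pth v v V0 k -> v < V0 ->
  sF F TC v = F (nthD TC 0) + F (nthD TC k).
Proof.
move=> H Hv; rewrite (pth_sum F _ H) (sum_collapse _ _ _ (fun j => F (nthD TC j) + F (nthD TC j.+1))) eqxx ifF; last lia.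
by rewrite !mul1n addn0.
Qed.

Lemma chunk_fresh F v V0 k TC j : map fst TC = pth v v V0 k -> v < V0 -> j < k ->
  sF F TC (V0 + j) = F (nthD TC j) + F (nthD TC j.+1).
Proof.
move=> H Hv Hj; rewrite (pth_sum F _ H) (sum_collapse _ _ _ (fun j => F (nthD TC j) + F (nthD TC j.+1))) ifT; last lia.
have -> : (V0 + j == v) = false by apply/eqP; lia.
by rewrite !mul0n !add0n addKn.
Qed.

Lemma chunk_out F v V0 k TC x : map fst TC = pth v v V0 k -> x != v ->
  ~~ ((V0 <= x) && (x < V0 + k)) -> sF F TC x = 0.
Proof.
move=> H Hv Hx; rewrite (pth_sum F _ H) (sum_collapse _ _ _ (fun j => F (nthD TC j) + F (nthD TC j.+1))) (negbTE Hx) (negbTE Hv).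
by rewrite !mul0n.
Qed.

Fixpoint Lc (k V0 : nat) (l : seq nat) : seq (nat * nat) :=
  match l with
  | [::] => [::]
  | v :: l' => pth v v V0 k ++ Lc k (V0 + k) l'
  end.

Definition good (k : nat) (D : seq (bool * bool)) : bool :=
  (nth dd D k == nth dd D 0) && all (fun d => d.2 == (nth dd D 0).2) D.

Fixpoint allch (k : nat) (l : seq nat) (TL : seq dT) : bool :=
  match l with
  | [::] => true
  | _ :: l' => good k (map snd (take k.+1 TL)) && allch k l' (drop k.+1 TL)
  end.
Lemma Lc_split k V0 v l (TL : seq dT) : map fst TL = Lc k V0 (v :: l) ->
  map fst (take k.+1 TL) = pth v v V0 k /\ map fst (drop k.+1 TL) = Lc k (V0 + k) l.
Proof.
move=> H; rewrite map_take map_drop H /=.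
by rewrite take_size_cat ?size_pth // drop_size_cat ?size_pth.
Qed.

Lemma Lc_nil k V0 (TL : seq dT) : map fst TL = Lc k V0 [::] -> TL = [::].
Proof. by case: TL. Qed.

Lemma Lc_out F k V0 l TL x : map fst TL = Lc k V0 l -> x \notin l ->
  ~~ ((V0 <= x) && (x < V0 + k * size l)) -> sF F TL x = 0.
Proof.
elim: l V0 TL => [|v l IH] V0 TL H.
  by rewrite (Lc_nil H) sF_nil.
rewrite in_cons negb_or => /andP [Hxv Hxl] Hr.
have [H1 H2] := Lc_split H.
rewrite -(cat_take_drop k.+1 TL) sF_cat (chunk_out F H1 Hxv); last first.
  apply/negP => /andP [a b]; move/negP: Hr; apply; apply/andP; split => //=; lia.
rewrite (IH _ _ H2 Hxl) //.
apply/negP => /andP [a b]; move/negP: Hr; apply; apply/andP; split => /=; lia.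
Qed.
Lemma sF_split F m (TL : seq dT) x : sF F TL x = sF F (take m TL) x + sF F (drop m TL) x.
Proof. by rewrite -sF_cat cat_take_drop. Qed.
Lemma Lc_root k V0 l (TL : seq dT) x : map fst TL = Lc k V0 l -> uniq l ->
  (forall v, v \in l -> v < V0) -> x \in l ->
  exists d1 d2, (forall F, sF F TL x = F d1 + F d2) /\ (allch k l TL -> d1 = d2).
Proof.
elim: l V0 TL => [|v l IH] V0 TL H //= /andP [Hvl Hu] Hlt.
have [H1 H2] := Lc_split H.
have Hv : v < V0 by apply: Hlt; rewrite in_cons eqxx.
rewrite in_cons => /orP [/eqP ->|Hx].
- exists (nthD (take k.+1 TL) 0), (nthD (take k.+1 TL) k); split.
    move=> F; rewrite (sF_split F k.+1) (chunk_root F H1 Hv).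
    rewrite (Lc_out F H2 Hvl) ?addn0 //.
    apply/negP => /andP [a b]; lia.
  by rewrite /nthD => /andP [/andP [/eqP -> _] _].
- have Hlt' : forall v0, v0 \in l -> v0 < V0 + k.
    by move=> v0 Hv0; have := Hlt v0; rewrite in_cons Hv0 orbT => /(_ isT); lia.
  have [d1 [d2 [HF Ha]]] := IH _ _ H2 Hu Hlt' Hx.
  exists d1, d2; split.
    move=> F; rewrite (sF_split F k.+1) (chunk_out F H1) ?add0n //.
      by apply/negP => /eqP E; move: Hvl; rewrite -E Hx.
    apply/negP => /andP [a b]; have := Hlt x; rewrite in_cons Hx orbT => /(_ isT); lia.
  by move=> /andP [_ Hal]; apply: Ha.
Qed.

Lemma Lc_fresh k V0 l (TL : seq dT) x : map fst TL = Lc k V0 l ->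
  (forall v, v \in l -> v < V0) -> (V0 <= x) && (x < V0 + k * size l) ->
  exists d1 d2, forall F, sF F TL x = F d1 + F d2.
Proof.
elim: l V0 TL => [|v l IH] V0 TL H Hlt /=; first by rewrite muln0 addn0; lia.
have [H1 H2] := Lc_split H.
have Hv : v < V0 by apply: Hlt; rewrite in_cons eqxx.
move=> Hx.
case: (ltnP x (V0 + k)) => Hxk.
- have [j Ej] : exists j, x = V0 + j by exists (x - V0); lia.
  subst x.
  exists (nthD (take k.+1 TL) j), (nthD (take k.+1 TL) j.+1) => F.
  rewrite (sF_split F k.+1) (chunk_fresh F H1 Hv); last lia.
  rewrite (Lc_out F H2) ?addn0 //.
    apply/negP => Hin; have := Hlt (V0 + j); rewrite in_cons Hin orbT => /(_ isT); lia.
  apply/negP => /andP [a b]; lia.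
- have Hlt' : forall v0, v0 \in l -> v0 < V0 + k.
    by move=> v0 Hv0; have := Hlt v0; rewrite in_cons Hv0 orbT => /(_ isT); lia.
  have [d1 [d2 HF]] := IH _ _ H2 Hlt' ltac:(apply/andP; split; lia).
  exists d1, d2 => F.
  rewrite (sF_split F k.+1) (chunk_out F H1) ?add0n //.
    apply/negP => /eqP E; lia.
  apply/negP => /andP [a b]; lia.
Qed.
Definition dg := sF (fun _ => 1).
Definition cs := sF (fun d => nat_of_bool d.1).
Definition sc := sF (fun d => nat_of_bool (d.1 && d.2)).
Definition sn := sF (fun d => nat_of_bool (~~ d.1 && d.2)).
Definition ss := sF (fun d => nat_of_bool d.2).

Lemma Lc_chunks k V0 l (TL : seq dT) (Cond : nat -> nat -> nat -> nat -> nat -> Prop)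
  (R : bool * bool -> bool * bool -> Prop) :
  (forall d1 d2 : bool * bool, Cond (1 + 1) (d1.1 + d2.1) ((d1.1 && d1.2) + (d2.1 && d2.2))
      ((~~ d1.1 && d1.2) + (~~ d2.1 && d2.2)) (d1.2 + d2.2) -> R d1 d2) ->
  (forall D, size D = k.+1 -> (forall j, j < k -> R (nth dd D j) (nth dd D j.+1)) -> good k D) ->
  map fst TL = Lc k V0 l -> (forall v, v \in l -> v < V0) ->
  (forall x, (V0 <= x) && (x < V0 + k * size l) ->
     Cond (dg TL x) (cs TL x) (sc TL x) (sn TL x) (ss TL x)) ->
  allch k l TL.
Proof.
move=> HC HR.
elim: l V0 TL => [|v l IH] V0 TL H Hlt Hx //=.
have [H1 H2] := Lc_split H.
have Hv : v < V0 by apply: Hlt; rewrite in_cons eqxx.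
apply/andP; split.
- apply: HR.
    by rewrite size_map -(size_map fst) H1 size_pth.
  move=> j Hj.
  have E : forall F, sF F TL (V0 + j) = F (nthD (take k.+1 TL) j) + F (nthD (take k.+1 TL) j.+1).
    move=> F; rewrite (sF_split F k.+1) (chunk_fresh F H1 Hv Hj).
    rewrite (Lc_out F H2) ?addn0 //.
      apply/negP => Hin; have := Hlt (V0 + j); rewrite in_cons Hin orbT => /(_ isT); lia.
    apply/negP => /andP [a b]; lia.
  apply: HC.
  have := Hx (V0 + j) ltac:(apply/andP; split; rewrite /= ?mulnS; lia).
  by rewrite /dg /cs /sc /sn /ss !E.
- have Hlt' : forall v0, v0 \in l -> v0 < V0 + k.
    by move=> v0 Hv0; have := Hlt v0; rewrite in_cons Hv0 orbT => /(_ isT); lia.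
  apply: (IH _ _ H2 Hlt') => x Hxr.
  have E : forall F, sF F TL x = sF F (drop k.+1 TL) x.
    move=> F; rewrite (sF_split F k.+1) (chunk_out F H1) ?add0n //.
      apply/negP => /eqP E; lia.
    apply/negP => /andP [a b]; lia.
  have := Hx x ltac:(apply/andP; split; rewrite /= ?mulnS; lia).
  by rewrite /dg /cs /sc /sn /ss !E.
Qed.
Lemma Lc_sigma k V0 l (TL : seq dT) (s0 : bool) : map fst TL = Lc k V0 l -> uniq l ->
  (forall v, v \in l -> v < V0) -> allch k l TL ->
  (forall v, v \in l -> ss TL v = 2 * s0) -> all (fun t : dT => t.2.2 == s0) TL.
Proof.
elim: l V0 TL => [|v l IH] V0 TL H; first by rewrite (Lc_nil H).
move=> /andP [Hvl Hu] Hlt /andP [Hg Ha] Hs.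
have [H1 H2] := Lc_split H.
have Hv : v < V0 by apply: Hlt; rewrite in_cons eqxx.
have Hlt' : forall v0, v0 \in l -> v0 < V0 + k.
  by move=> v0 Hv0; have := Hlt v0; rewrite in_cons Hv0 orbT => /(_ isT); lia.
rewrite -(cat_take_drop k.+1 TL) all_cat; apply/andP; split.
- move: Hg; rewrite /good => /andP [/eqP Hk Hall].
  have := Hs v; rewrite in_cons eqxx => /(_ isT).
  rewrite /ss (sF_split _ k.+1) (chunk_root _ H1 Hv) (Lc_out _ H2 Hvl); last first.
    apply/negP => /andP [a b]; lia.
  rewrite /nthD Hk addn0 => Hss.
  have Hd : (nth dd [seq i.2 | i <- take k.+1 TL] 0).2 = s0.
    by move: Hss; case: (nth dd _ 0).2; case: (s0).
  move: Hall; rewrite all_map Hd.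
  by apply: sub_all => t.
- apply: (IH _ _ H2 Hu Hlt' Ha) => v0 Hv0.
  have := Hs v0; rewrite in_cons Hv0 orbT => /(_ isT).
  rewrite /ss (sF_split _ k.+1) (chunk_out _ H1) ?add0n //.
    by apply/negP => /eqP E; move: Hvl; rewrite -E Hv0.
  apply/negP => /andP [a b]; have := Hlt v0; rewrite in_cons Hv0 orbT => /(_ isT); lia.
Qed.
Lemma zip_pth a b V0 k : zip (a :: iota V0 k) (rcons (iota V0 k) b) = pth a b V0 k.
Proof. by elim: k a V0 => [|k IH] a V0 //=; rewrite IH. Qed.

Lemma cyc_pth v V0 k : cyc_edges (v :: iota V0 k) = pth v v V0 k.
Proof. by rewrite /cyc_edges rot1_cons zip_pth. Qed.

Lemma foldl_attach n l (G : graph) :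
  foldl (attach n) G l = (G.1 + (n - 1) * size l, G.2 ++ Lc (n - 1) G.1 l).
Proof.
elim: l G => [|v l IH] [V E] /=; first by rewrite muln0 addn0 cats0.
rewrite IH /= cyc_pth catA; congr (_, _); lia.
Qed.

Definition Dl (G : graph) := [seq v <- iota 0 G.1 | degE G.2 v == 2].

Lemma Grn_S n k : Grn n k.+1 =
  ((Grn n k).1 + (n - 1) * size (Dl (Grn n k)), (Grn n k).2 ++ Lc (n - 1) (Grn n k).1 (Dl (Grn n k))).
Proof. by rewrite /Grn iterS /step foldl_attach. Qed.

Lemma Grn_0 n : 1 <= n -> Grn n 0 = (n, pth 0 0 1 (n - 1)).
Proof. by case: n => // n _; rewrite /Grn /= /G0 subn1 /= -cyc_pth. Qed.
Definition ltB (B : nat) (e : nat * nat) := (e.1 < B) && (e.2 < B).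

Lemma pth_lt B a b V0 k : a < B -> b < B -> V0 + k <= B -> all (ltB B) (pth a b V0 k).
Proof.
elim: k a V0 => [|k IH] a V0 Ha Hb Hk /=; first by rewrite /ltB Ha Hb.
rewrite /ltB /= Ha /=; apply/andP; split; first lia.
apply: IH => //; lia.
Qed.

Lemma Lc_lt B k V0 l : (forall v, v \in l -> v < B) -> V0 + k * size l <= B ->
  all (ltB B) (Lc k V0 l).
Proof.
elim: l V0 => [|v l IH] V0 Hl Hs //=.
rewrite all_cat; apply/andP; split.
  apply: pth_lt; try by apply: Hl; rewrite in_cons eqxx.
  move: Hs; rewrite /= mulnS; lia.
apply: IH; first by move=> v0 Hv0; apply: Hl; rewrite in_cons Hv0 orbT.
move: Hs; rewrite /= mulnS; lia.
Qed.

Lemma ltB_mono B B' e : B <= B' -> ltB B e -> ltB B' e.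
Proof. rewrite /ltB => H /andP [a b]; apply/andP; split; lia. Qed.

Lemma Dl_lt (G : graph) v : v \in Dl G -> v < G.1.
Proof. by rewrite mem_filter mem_iota => /andP [_ /andP [_ H]]. Qed.

Lemma Grn_lt n k : 1 <= n -> all (ltB (Grn n k).1) (Grn n k).2.
Proof.
move=> Hn; elim: k => [|k IH].
  rewrite Grn_0 //=; apply: pth_lt; lia.
rewrite Grn_S /= all_cat; apply/andP; split.
  by apply: sub_all IH => e; apply: ltB_mono; apply: leq_addr.
apply: Lc_lt => // v /Dl_lt H; apply: leq_trans H (leq_addr _ _).
Qed.

Definition T0 (E : seq (nat * nat)) : seq dT := [seq (e, dd) | e <- E].
Lemma sF_zero F (T : seq dT) x B : all (ltB B) (map fst T) -> B <= x -> sF F T x = 0.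
Proof.
rewrite all_map => Ha Hx; rewrite /sF big1_seq // => t /andP [_ Ht].
move/allP: Ha => /(_ t Ht); rewrite /ltB /inc /= => /andP [a b].
have -> : (t.1.1 == x) = false by apply/negbTE; rewrite neq_ltn (leq_trans a Hx).
have -> : (t.1.2 == x) = false by apply/negbTE; rewrite neq_ltn (leq_trans b Hx).
by rewrite muln0.
Qed.

Lemma degE_dg (T : seq dT) x : degE (map fst T) x = dg T x.
Proof.
elim: T => [|t T IH]; first by rewrite /dg sF_nil.
rewrite /dg sF_cons -/(dg T x) -IH /degE /= /inc; lia.
Qed.

Lemma T0_fst E : map fst (T0 E) = E.
Proof. by rewrite /T0 -map_comp map_id. Qed.
Lemma sF_ext F G (T : seq dT) x : (forall d, F d = G d) -> sF F T x = sF G T x.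
Proof. by move=> H; apply: eq_bigr => t _; rewrite H. Qed.

Lemma sF_add F G (T : seq dT) x : sF (fun d => F d + G d) T x = sF F T x + sF G T x.
Proof. by rewrite /sF -big_split; apply: eq_bigr => t _; rewrite mulnDl. Qed.

Lemma sF_le F G (T : seq dT) x : (forall d, F d <= G d) -> sF F T x <= sF G T x.
Proof. by move=> H; apply: leq_sum => t _; rewrite leq_mul2r H orbT. Qed.

Lemma sc_le_cs T x : sc T x <= cs T x.
Proof. by apply: sF_le => -[[] []]. Qed.

Lemma sn_cs_le T x : sn T x + cs T x <= dg T x.
Proof. by rewrite /sn /cs -sF_add; apply: sF_le => -[[] []]. Qed.

Lemma ss_split T x : ss T x = sc T x + sn T x.
Proof. by rewrite /sc /sn -sF_add; apply: sF_ext => -[[] []]. Qed.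

Lemma ss_const T x (s0 : bool) : all (fun t : dT => t.2.2 == s0) T -> ss T x = s0 * dg T x.
Proof.
move=> /allP H; rewrite /ss /dg /sF big_distrr; apply: eq_big_seq => t Ht /=.
by rewrite (eqP (H t Ht)) mulnA muln1.
Qed.

Lemma root_arith (c s : bool) dg' cs' sc' sn' : dg' = 2 -> sc' <= cs' -> sn' + cs' <= dg' ->
  2 * (cs' + (c + c)) = dg' + (1 + 1) ->
  sc' + ((c && s) + (c && s)) = sn' + ((~~ c && s) + (~~ c && s)) ->
  cs' <> 1 /\ sc' + sn' = s + s.
Proof. by case: c; case: s => /=; lia. Qed.
Definition Bal (T : seq dT) x := 2 * cs T x = dg T x /\ sc T x = sn T x.
Definition HypM (T : seq dT) := forall x,
  (dg T x = 2 -> cs T x <> 1 /\ ss T x <> 1) /\ (dg T x <> 2 -> Bal T x).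
Definition Const (T : seq dT) := exists s0 : bool, all (fun t : dT => t.2.2 == s0) T.
Lemma step_reduce n k (T' TL : seq dT) (Cond : nat -> nat -> nat -> nat -> nat -> Prop)
  (R : bool * bool -> bool * bool -> Prop) :
  (forall d1 d2 : bool * bool, Cond (1 + 1) (d1.1 + d2.1) ((d1.1 && d1.2) + (d2.1 && d2.2))
      ((~~ d1.1 && d1.2) + (~~ d2.1 && d2.2)) (d1.2 + d2.2) -> R d1 d2) ->
  (forall D, size D = (n - 1).+1 -> (forall j, j < n - 1 -> R (nth dd D j) (nth dd D j.+1)) ->
     good (n - 1) D) ->
  1 <= n ->
  map fst T' = (Grn n k).2 -> map fst TL = Lc (n - 1) (Grn n k).1 (Dl (Grn n k)) ->
  (forall x, dg (T' ++ TL) x <> 2 -> Bal (T' ++ TL) x) ->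
  (forall x, ((Grn n k).1 <= x) && (x < (Grn n k).1 + (n - 1) * size (Dl (Grn n k))) ->
     Cond (dg (T' ++ TL) x) (cs (T' ++ TL) x) (sc (T' ++ TL) x) (sn (T' ++ TL) x) (ss (T' ++ TL) x)) ->
  HypM T' /\ (Const T' -> Const (T' ++ TL)).
Proof.
move=> HC HR Hn HT' HTL HB HCond.
set V := (Grn n k).1 in HTL HCond *.
set D := Dl (Grn n k) in HTL HCond *.
have Hlt : all (ltB V) (map fst T') by rewrite HT'; apply: Grn_lt.
have HD : forall v, v \in D -> v < V by move=> v; apply: Dl_lt.
have Hu : uniq D by apply: filter_uniq; apply: iota_uniq.
have Hz : forall F x, V <= x -> sF F T' x = 0 by move=> F x Hx; apply: sF_zero Hlt Hx.
have Hall : allch (n - 1) D TL.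
  apply: (Lc_chunks HC HR HTL HD) => x Hx.
  have E : forall F, sF F (T' ++ TL) x = sF F TL x.
    by move=> F; rewrite sF_cat Hz ?add0n //; case/andP: Hx.
  by move: (HCond x Hx); rewrite /dg /cs /sc /sn /ss !E.
have Hroot : forall x, x \in D -> exists d, forall F, sF F TL x = F d + F d.
  move=> x Hx; have [d1 [d2 [H1 H2]]] := Lc_root HTL Hu HD Hx.
  by exists d1 => F; rewrite H1 (H2 Hall).
have Hnot : forall x, x < V -> x \notin D -> forall F, sF F TL x = 0.
  move=> x Hx HxD F; apply: (Lc_out F HTL HxD); apply/negP => /andP [a b]; lia.
have HdgD : forall x, x \in D -> dg T' x = 2.
  by move=> x; rewrite -degE_dg HT' mem_filter => /andP [/eqP ->].
have HdgnD : forall x, x < V -> x \notin D -> dg T' x <> 2.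
  move=> x Hx; rewrite -degE_dg HT' mem_filter mem_iota /= Hx andbT => /negP Hn2 E.
  by apply: Hn2; rewrite E.
have Hrt : forall x, x \in D -> exists s : bool,
    ss TL x = s + s /\ cs T' x <> 1 /\ sc T' x + sn T' x = s + s.
  move=> x Hx; have [d Hd] := Hroot x Hx.
  exists d.2; rewrite /ss Hd; split => //.
  have [H1 H2] : Bal (T' ++ TL) x.
    apply: HB; rewrite /dg sF_cat Hd -/(dg T' x) HdgD //.
  move: H1 H2; rewrite /Bal /cs /dg /sc /sn !sF_cat !Hd -/(cs T' x) -/(dg T' x) -/(sc T' x) -/(sn T' x).
  case: d Hd => c s Hd /=.
  apply: root_arith; [exact: HdgD | exact: sc_le_cs | exact: sn_cs_le].
split.
- move=> x; case: (leqP V x) => HxV.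
    rewrite /dg /cs /sc /sn /Bal /dg /cs /sc /sn !Hz //; split => //.
  case HxD : (x \in D).
    have [s [_ [H1 H2]]] := Hrt x HxD; rewrite ss_split H2; split.
      by move=> _; split => //; case: (s).
    by move=> E; exfalso; apply: E; apply: HdgD.
  have HxD' : x \notin D by rewrite HxD.
  split; first by move=> E; exfalso; apply: (HdgnD x HxV HxD').
  move=> Hd; have := HB x; rewrite /Bal /dg /cs /sc /sn !sF_cat !(Hnot x HxV HxD') !addn0.
  by apply.
- move=> [s0 Hs0]; exists s0; rewrite all_cat Hs0 /=.
  apply: (Lc_sigma HTL Hu HD Hall) => v Hv.
  have [s [H1 [_ H2]]] := Hrt v Hv.
  rewrite H1 -H2 -ss_split (ss_const _ Hs0) (HdgD v Hv); lia.
Qed.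
Definition Cmono (a b c d e : nat) := a = 2 -> b <> 1 /\ e <> 1.
Definition Ctop (a b c d e : nat) := 2 * b = a /\ c = d.

Lemma HC_mono (d1 d2 : bool * bool) : Cmono (1 + 1) (d1.1 + d2.1) ((d1.1 && d1.2) + (d2.1 && d2.2))
      ((~~ d1.1 && d1.2) + (~~ d2.1 && d2.2)) (d1.2 + d2.2) -> d1 = d2.
Proof.
case: d1 d2 => [c1 s1] [c2 s2]; rewrite /Cmono /= => /(_ erefl) [].
by case: c1; case: c2; case: s1; case: s2.
Qed.

Lemma HC_top (d1 d2 : bool * bool) : Ctop (1 + 1) (d1.1 + d2.1) ((d1.1 && d1.2) + (d2.1 && d2.2))
      ((~~ d1.1 && d1.2) + (~~ d2.1 && d2.2)) (d1.2 + d2.2) -> d2 = (~~ d1.1, d1.2).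
Proof.
case: d1 d2 => [c1 s1] [c2 s2]; rewrite /Ctop /= => [[]].
by case: c1; case: c2; case: s1; case: s2.
Qed.

Lemma good_of k D (f : nat -> bool * bool) : size D = k.+1 ->
  (forall j, j <= k -> nth dd D j = f j) -> f k = f 0 -> (forall j, (f j).2 = (f 0).2) -> good k D.
Proof.
move=> Hs Hf Hk H2; rewrite /good Hf // Hf // Hk eqxx /=.
apply/allP => d /(nthP dd) [j Hj <-]; rewrite Hf; last by rewrite -ltnS -Hs.
by rewrite (H2 j).
Qed.

Lemma HR_mono k D : size D = k.+1 -> (forall j, j < k -> nth dd D j = nth dd D j.+1) -> good k D.
Proof.
move=> Hs H; apply: (good_of (f := fun _ => nth dd D 0)) => // j.
elim: j => [|j IH] Hj //; rewrite -H; [apply: IH|]; lia.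
Qed.

Lemma HR_top k D : ~~ odd k -> size D = k.+1 ->
  (forall j, j < k -> nth dd D j.+1 = (~~ (nth dd D j).1, (nth dd D j).2)) -> good k D.
Proof.
move=> Hk Hs H.
apply: (good_of (f := fun j => (((nth dd D 0).1 (+) odd j), (nth dd D 0).2))) => //.
- elim=> [|j IH] Hj; first by rewrite addbF; case: (nth dd D 0).
  rewrite H; last lia. rewrite IH; last lia.
  by rewrite /= addbN.
- by rewrite (negbTE Hk).
Qed.
Lemma split_T n k (T : seq dT) : map fst T = (Grn n k.+1).2 ->
  map fst (take (size (Grn n k).2) T) = (Grn n k).2 /\
  map fst (drop (size (Grn n k).2) T) = Lc (n - 1) (Grn n k).1 (Dl (Grn n k)).
Proof.
rewrite Grn_S /= => H; rewrite map_take map_drop H.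
by rewrite take_size_cat // drop_size_cat.
Qed.

Lemma LevelConst n k (T : seq dT) : 3 <= n -> map fst T = (Grn n k).2 -> HypM T -> Const T.
Proof.
move=> Hn; elim: k T => [|k IH] T HT HM.
- move: HT; rewrite Grn_0; last lia. move=> /= HT.
  have Hg : good (n - 1) (map snd T).
    apply: HR_mono; first by rewrite size_map -(size_map fst) HT size_pth.
    move=> j Hj; apply: HC_mono.
    have E : forall F, sF F T (1 + j) = F (nthD T j) + F (nthD T j.+1).
      by move=> F; apply: chunk_fresh HT _ Hj.
    have [H1 _] := HM (1 + j).
    by move: H1; rewrite /dg /cs /sc /sn /ss !E.
  exists (nth dd (map snd T) 0).2.
  by move: Hg; rewrite /good all_map => /andP [_].
- have [H1 H2] := split_T HT.
  rewrite -(cat_take_drop (size (Grn n k).2) T) in HM *.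
  have [HM' HC'] := step_reduce (@HC_mono) (@HR_mono (n - 1)) ltac:(lia) H1 H2
     (fun x Hx => (HM x).2 Hx) (fun x _ => (HM x).1).
  by apply: HC'; apply: IH.
Qed.

Lemma TopConst n r (T : seq dT) : 3 <= n -> odd n -> map fst T = (Grn n r.+1).2 ->
  (forall x, Bal T x) -> Const T.
Proof.
move=> Hn Ho HT HB.
have [H1 H2] := split_T HT.
rewrite -(cat_take_drop (size (Grn n r).2) T) in HB *.
have Hk : ~~ odd (n - 1) by rewrite oddB ?Ho //; lia.
have HR : forall D, size D = (n - 1).+1 ->
    (forall j, j < n - 1 -> (fun d1 d2 => d2 = (~~ d1.1, d1.2)) (nth dd D j) (nth dd D j.+1)) ->
    good (n - 1) D.
  by move=> D Hs H; apply: HR_top.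
have [HM' HC'] := step_reduce (@HC_top) HR ltac:(lia) H1 H2 (fun x _ => HB x) (fun x _ => HB x).
by apply: HC'; apply: (LevelConst _ H1 HM'); lia.
Qed.
Lemma size_Lc k V0 l : size (Lc k V0 l) = k.+1 * size l.
Proof.
elim: l V0 => [|v l IH] V0 /=; first by rewrite muln0.
by rewrite size_cat size_pth IH mulnS.
Qed.

Lemma T0_cat E1 E2 : T0 (E1 ++ E2) = T0 E1 ++ T0 E2.
Proof. by rewrite /T0 map_cat. Qed.

Lemma size_filter_all (P : pred nat) s : (forall x, x \in s -> P x) -> size (filter P s) = size s.
Proof. by move=> H; rewrite size_filter -count_predT; apply: eq_in_count => x /H ->. Qed.

Lemma size_filter_none (P : pred nat) s : (forall x, x \in s -> ~~ P x) -> size (filter P s) = 0.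
Proof. by move=> H; rewrite size_filter -(count_pred0 s); apply: eq_in_count => x /H /negbTE ->. Qed.

Lemma Dl_size n k : 3 <= n -> size (Dl (Grn n k)) = n * (n - 1) ^ k.
Proof.
move=> Hn; elim: k => [|k IH].
- rewrite /Dl Grn_0 /=; last lia.
  rewrite expn0 muln1 size_filter_all ?size_iota // => x; rewrite mem_iota add0n => Hx.
  have HT := T0_fst (pth 0 0 1 (n - 1)).
  rewrite -HT degE_dg.
  case: x Hx => [|j] Hj.
    by rewrite /dg (chunk_root _ HT).
  by rewrite -add1n /dg (chunk_fresh _ HT) //; lia.
- rewrite /Dl Grn_S /= iotaD filter_cat size_cat.
  set G := Grn n k in IH *.
  set D := Dl G in IH *.
  have HT := T0_fst G.2.
  have HL := T0_fst (Lc (n - 1) G.1 D).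
  have HD : forall v, v \in D -> v < G.1 by move=> v; apply: Dl_lt.
  have Hu : uniq D by apply: filter_uniq; apply: iota_uniq.
  have Hlt : all (ltB G.1) (map fst (T0 G.2)) by rewrite HT; apply: Grn_lt; lia.
  have Hdeg : forall x, degE (G.2 ++ Lc (n - 1) G.1 D) x =
      sF (fun _ => 1) (T0 G.2) x + sF (fun _ => 1) (T0 (Lc (n - 1) G.1 D)) x.
    by move=> x; rewrite -(T0_fst (G.2 ++ _)) degE_dg T0_cat /dg sF_cat.
  rewrite size_filter_none ?add0n; last first.
    move=> x; rewrite mem_iota add0n => Hx.
    rewrite Hdeg -/(dg _ x).
    case HxD : (x \in D).
      have [d1 [d2 [H1 _]]] := Lc_root HL Hu HD HxD.
      rewrite H1 -degE_dg HT.
      by move: HxD; rewrite /D /Dl mem_filter => /andP [/eqP -> _].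
    rewrite (Lc_out _ HL); [| by rewrite HxD | by apply/negP => /andP [a b]; lia].
    rewrite addn0 -degE_dg HT.
    by move: HxD; rewrite /D /Dl mem_filter mem_iota Hx andbT => /negbT.
  rewrite size_filter_all ?size_iota; first by rewrite IH expnS mulnCA.
  move=> x; rewrite mem_iota => Hx.
  rewrite Hdeg (sF_zero _ Hlt); last lia.
  have [d1 [d2 H1]] := Lc_fresh HL HD Hx.
  by rewrite H1.
Qed.
Lemma Grn_size n k : 3 <= n -> size (Grn n k).2 = n + n * n * \sum_(j < k) (n - 1) ^ j.
Proof.
move=> Hn; elim: k => [|k IH].
  by rewrite Grn_0 ?size_pth /= ?big_ord0; lia.
rewrite Grn_S size_cat size_Lc Dl_size // IH big_ord_recr /=.
have -> : (n - 1).+1 = n by lia.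
set S := \sum_(j < k) _; set X := (n - 1) ^ k.
by rewrite !mulnDr !addnA mulnA.
Qed.

Lemma geom n r : 3 <= n -> (n - 2) * \sum_(j < r) (n - 1) ^ j + 1 = (n - 1) ^ r.
Proof.
move=> Hn; elim: r => [|r IH]; first by rewrite big_ord0 muln0.
rewrite big_ord_recr /= mulnDr -addnAC IH expnS.
set X := (n - 1) ^ r.
have -> : n - 1 = (n - 2).+1 by lia.
by rewrite mulSn addnC.
Qed.

Lemma final_arith n r : 3 <= n -> odd n -> 1 <= r ->
  ~~ odd (n + n * n * \sum_(j < r) (n - 1) ^ j) /\
  ((n - 1) ^ r - 1) %/ (n - 2) = \sum_(j < r) (n - 1) ^ j.
Proof.
move=> Hn Ho Hr.
have G := geom r Hn.
set S := \sum_(j < r) _ in G *.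
split.
  have HS : odd S.
    have Ho1 : odd (n - 1) = false by rewrite oddB ?Ho //; lia.
    have Ho2 : odd (n - 2) = true by rewrite oddB ?Ho //; lia.
    have Hr0 : (r == 0) = false by apply/eqP; lia.
    have : odd ((n - 1) ^ r) = false by rewrite oddX Ho1 Hr0.
    rewrite -G oddD oddM Ho2 /=.
    by case: (odd S).
  by rewrite oddD !oddM Ho HS.
rewrite -G addnK mulKn //; lia.
Qed.
Lemma count_sumb (p : pred nat) s : count p s = \sum_(k <- s) p k.
Proof. by elim: s => [|x s IH]; rewrite ?big_nil ?big_cons //= IH. Qed.

Lemma count_split2 (P : pred nat) s :
  count (fun k => ~~ odd k && P k) s + count (fun k => odd k && P k) s = count P s.
Proof. elim: s => [|x s IH] //=; rewrite -IH; case: (odd x); case: (P x) => /=; lia. Qed.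


Lemma count_idx (es : seq nat) i : count (fun k => nth 0 es k == i) (iota 0 (size es)) = count_mem i es.
Proof. by rewrite -[in RHS](mkseq_nth 0 es) /mkseq count_map. Qed.
Lemma sum_count (P : pred nat) (es : seq nat) m (g : nat -> nat) :
  (forall k, k < size es -> nth 0 es k < m) ->
  \sum_(i < m) count (fun k => P k && (nth 0 es k == i)) (iota 0 (size es)) * g i =
  \sum_(k <- iota 0 (size es)) P k * g (nth 0 es k).
Proof.
move=> Hm.
transitivity (\sum_(i < m) \sum_(k <- iota 0 (size es)) (P k && (nth 0 es k == i)) * g i).
  apply: eq_bigr => i _. rewrite (count_sumb (fun k => P k && (nth 0 es k == i))).
  by rewrite big_distrl.
rewrite exchange_big /= big_seq [RHS]big_seq.
apply: eq_bigr => k; rewrite mem_iota add0n => /andP [_ Hk].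
rewrite (bigD1 (Ordinal (Hm k Hk))) //= eqxx andbT big1 ?addn0 //.
move=> i /negbTE Hi; rewrite -val_eqE /= in Hi.
by rewrite eq_sym Hi andbF.
Qed.
Lemma alt_sum p (a : nat -> nat) :
  \sum_(k <- iota 0 p.*2) ~~ odd k * (a k + a k.+1) + a p.*2 =
  \sum_(k <- iota 0 p.*2) odd k * (a k + a k.+1) + a 0.
Proof.
elim: p => [|p IH]; first by rewrite /= !big_nil.
have -> : p.+1.*2 = p.*2 + 2 by rewrite doubleS; lia.
rewrite iotaD !big_cat /= !big_cons !big_nil /= odd_double /= add0n.
move: IH; set A := \sum_(k <- _) _; set B := \sum_(k <- _) _.
have -> : p.*2 + 2 = p.*2.+2 by lia.
lia.
Qed.

Lemma even_count p : \sum_(k <- iota 0 p.*2) ~~ odd k = p.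
Proof.
elim: p => [|p IH]; first by rewrite big_nil.
have -> : p.+1.*2 = p.*2 + 2 by rewrite doubleS; lia.
rewrite iotaD big_cat /= !big_cons big_nil /= odd_double /= add0n IH; lia.
Qed.
Lemma trail_basic E es : perm_eq es (iota 0 (size E)) ->
  size es = size E /\ (forall k, k < size es -> nth 0 es k < size E) /\
  (forall i : 'I_(size E), Bw_plus E es i + Bw_minus E es i = 1).
Proof.
move=> Hp.
have Hsz : size es = size E by rewrite (perm_size Hp) size_iota.
split => //; split.
  move=> k Hk; have : nth 0 es k \in es by apply: mem_nth.
  by rewrite (perm_mem Hp) mem_iota.
move=> i; rewrite !ffunE (count_split2 (fun k => nth 0 es k == i)) count_idx.
rewrite (permP Hp) count_uniq_mem ?iota_uniq // mem_iota /=.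
by rewrite ltn_ord.
Qed.

Lemma trail_toric E es : closed_eulerian_trail E es -> ~~ odd (size E) ->
  toric_rel (Bw_plus E es) (Bw_minus E es).
Proof.
move=> [Hp [vs [Hs [H0 Ht]]]] He x.
have [Hsz [Hnth _]] := trail_basic Hp.
have E1 : forall (P : pred nat), \sum_(i < size E) count (fun k => P k && (nth 0 es k == i)) (iota 0 (size es)) * inc (nth (0, 0) E i) x
   = \sum_(k <- iota 0 (size es)) P k * ((nth 0 vs k == x) + (nth 0 vs k.+1 == x)).
  move=> P; rewrite (sum_count P (fun i => inc (nth (0, 0) E i) x) Hnth).
  rewrite big_seq [RHS]big_seq; apply: eq_bigr => k; rewrite mem_iota add0n => /andP [_ Hk].
  move: (Ht k Hk) => /=; rewrite /inc.
  case/orP => /andP [/eqP -> /eqP ->] //; by rewrite addnC.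
rewrite /Bw_plus /Bw_minus.
under eq_bigr => i _ do rewrite ffunE.
under [RHS]eq_bigr => i _ do rewrite ffunE.
rewrite (E1 (fun k => ~~ odd k)) (E1 (fun k => odd k)).
have [p Hp2] : exists p, size es = p.*2.
  exists (size es)./2; rewrite -[LHS]odd_double_half Hsz (negbTE He) //.
have := alt_sum p (fun j => nth 0 vs j == x); rewrite -Hp2 -H0 => /addIn.
by [].
Qed.
Lemma pw (a b c d : nat) : a + b = 1 -> c <= a -> d <= b ->
  [/\ nat_of_bool (a == 1) = a, nat_of_bool ((a == 1) && (c + d == 1)) = c &
      nat_of_bool (~~ (a == 1) && (c + d == 1)) = d].
Proof. by case: a b c d => [|[|?]] [|[|?]] [|[|?]] [|[|?]]. Qed.

Lemma sum_enum m (G : 'I_m -> nat) : \sum_(i <- enum 'I_m) G i = \sum_(i < m) G i.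
Proof. by rewrite enumT. Qed.

Unset Implicit Arguments.

Theorem proposition4p1 (n r : nat) (es : seq nat) :
  3 <= n -> odd n -> 1 <= r ->
  closed_eulerian_trail (Grn n r).2 es ->
  primitive (Bw_plus (Grn n r).2 es) (Bw_minus (Grn n r).2 es) /\
  2 * Bw_deg (Grn n r).2 es = n + n ^ 2 * (((n - 1) ^ r - 1) %/ (n - 2)).
Proof.
move=> Hn Ho Hr Htr.
have [Hev Hdiv] := final_arith Hn Ho Hr.
have Hsize := Grn_size r Hn.
set E := (Grn n r).2 in Htr Hsize *.
have HevE : ~~ odd (size E) by rewrite Hsize.
have Htor := trail_toric Htr HevE.
have [Hp _] := Htr.
have [Hsz [Hnth Huv]] := trail_basic Hp.
have Hm0 : 0 < size E by rewrite Hsize; lia.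
have [p Hp2] : exists p, size es = p.*2.
  exists (size es)./2; rewrite -[LHS]odd_double_half Hsz (negbTE HevE) //.
split; last first.
  rewrite /Bw_deg.
  transitivity (2 * \sum_(i < size E) count (fun k => ~~ odd k && (nth 0 es k == i))
     (iota 0 (size es)) * (fun _ => 1) i).
    by congr (_ * _); apply: eq_bigr => i _; rewrite ffunE muln1.
  rewrite (sum_count (fun k => ~~ odd k) (fun _ => 1) Hnth).
  under eq_bigr => k _ do rewrite muln1.
  by rewrite Hp2 even_count mul2n -Hp2 Hsz Hsize Hdiv mulnn.
set u := Bw_plus E es; set v := Bw_minus E es.
split.
  apply/eqP => Euv; have := Huv (Ordinal Hm0); rewrite -/u -/v Euv; lia.
split => // w z Hwz Hneq Hw Hz.
set T : seq dT := [seq (nth (0, 0) E i, (u i == 1, w i + z i == 1)) | i : 'I_(size E) <- enum 'I_(size E)].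
have HT : map fst T = E.
  rewrite /T -map_comp.
  have -> : [seq (fst \o (fun i : 'I_(size E) => (nth (0, 0) E i, (u i == 1, w i + z i == 1)))) i
        | i <- enum 'I_(size E)] = [seq nth (0, 0) E i | i <- map val (enum 'I_(size E))].
    by rewrite -map_comp.
  by rewrite val_enum_ord -/(mkseq _ _) mkseq_nth.
have HsF : forall F x, sF F T x =
    \sum_(i < size E) F (u i == 1, w i + z i == 1) * inc (nth (0, 0) E i) x.
  by move=> F x; rewrite /sF /T big_map sum_enum.
have HBal : forall x, Bal T x.
  move=> x; rewrite /Bal /dg /cs /sc /sn !HsF /=.
  have P i := pw (Huv i) (Hw i) (Hz i).
  split.
    transitivity (\sum_(i < size E) u i * inc (nth (0, 0) E i) x +
                  \sum_(i < size E) v i * inc (nth (0, 0) E i) x).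
      rewrite -(Htor x) addnn -mul2n; congr (_ * _).
      by apply: eq_bigr => i _; have [-> _ _] := P i.
    rewrite -big_split /=; apply: eq_bigr => i _.
    by rewrite -mulnDl Huv mul1n.
  transitivity (\sum_(i < size E) w i * inc (nth (0, 0) E i) x).
    by apply: eq_bigr => i _; have [_ -> _] := P i.
  rewrite (Hwz x); apply: eq_bigr => i _; by have [_ _ ->] := P i.
have HT' : map fst T = (Grn n r.-1.+1).2 by rewrite prednK.
have [s0 Hs0] := TopConst Hn Ho HT' HBal.
have Hsig : forall i, (w i + z i == 1) = s0.
  move=> i.
  have Hin : (nth (0, 0) E i, (u i == 1, w i + z i == 1)) \in T by apply: map_f; rewrite mem_enum.
  by move/allP: Hs0 => /(_ _ Hin) /eqP.
case: s0 Hsig Hs0 => Hsig _.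
  split; apply/ffunP => j; have := Hw j; have := Hz j; have := Huv j; move: (Hsig j) => /eqP; rewrite -/u -/v;
   set a := w j; set b := z j; set c := u j; set d := v j; lia.
exfalso; move/negP: Hneq; apply; apply/eqP/ffunP => j.
have := Hw j; have := Hz j; have := Huv j; move: (Hsig j) => /eqP; rewrite -/u -/v;
   set a := w j; set b := z j; set c := u j; set d := v j; lia.
Qed.
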